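(* Construct vectors in $\mathbb{R}^n$ as follows. For each $j=1,2,\dots,n$, choose $n-j+1$ linearly independent vectors in $\mathbb{R}^n$ each of which has its first $j-1$ coordinates equal to zero and its $j$-th coordinate nonzero (so for $j=1$: $n$ linearly independent vectors with nonzero first coordinate; for $j=2$: $n-1$ linearly independent vectors with zero first coordinate and nonzero second coordinate; and so on). The resulting collection $\{x_k\}_{k=1}^{\frac{n(n+1)}{2}}$ is a frame for $\mathbb{R}^n$ which is injective.
   Context: A family $\{x_k\}$ of vectors in a Hilbert space is called injective if whenever a self-adjoint operator $T$ satisfies $\langle Tx_k,x_k\rangle=0$ for all $k$, then $T=0$. *)

(* Defs.v *)
From HB Require Import structures.
From mathcomp Require Import all_boot all_order all_algebra.
From mathcomp Require Import reals.
Set Implicit Arguments. Unset Strict Implicit. Unset Printing Implicit Defensive.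
Import Order.TTheory GRing.Theory Num.Theory.
Local Open Scope ring_scope.

Definition ip (R : realType) (n : nat) (x y : 'rV[R]_n) : R := (x *m y^T) 0 0.

(* a linear operator on R^n, represented by a matrix acting on row vectors: T x = x *m T *)
Definition self_adjoint (R : realType) (n : nat) (T : 'M[R]_n) : Prop :=
  forall x y : 'rV[R]_n, ip (x *m T) y = ip x (y *m T).

Definition is_frame (R : realType) (n : nat) (I : finType) (x : I -> 'rV[R]_n) : Prop :=
  exists A B : R, 0 < A /\ A <= B /\
    forall y : 'rV[R]_n,
      A * ip y y <= \sum_(k : I) (ip y (x k)) ^+ 2 /\
      \sum_(k : I) (ip y (x k)) ^+ 2 <= B * ip y y.

Definition injective_family (R : realType) (n : nat) (I : finType) (x : I -> 'rV[R]_n) : Prop :=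
  forall T : 'M[R]_n, self_adjoint T -> (forall k, ip (x k *m T) (x k) = 0) -> T = 0.

Definition lin_indep (R : realType) (n : nat) (I : finType) (v : I -> 'rV[R]_n) : Prop :=
  forall c : I -> R, \sum_(i : I) c i *: v i = 0 -> forall i, c i = 0.

(* Main.v *)
Require Import Defs.
From HB Require Import structures.
From mathcomp Require Import all_boot all_order all_algebra.
From mathcomp Require Import reals.
From mathcomp Require Import ring lra zify.
From Stdlib Require Import Lia.
Import Order.TTheory GRing.Theory Num.Theory.
Local Open Scope ring_scope.

Section H.
Variable R : realType.

Lemma amgm2 (x y : R) : 2 * (x * y) <= x ^+ 2 + y ^+ 2.
Proof.
have h := sqr_ge0 (x - y).
rewrite sqrrB in h. rewrite -subr_ge0. apply: le_trans h _. rewrite le_eqVlt; apply/orP; left; apply/eqP. rewrite mulr2n. ring.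
Qed.

Lemma sqr_sum_le (I : finType) (a : I -> R) :
  (\sum_i a i) ^+ 2 <= #|I|%:R * \sum_i a i ^+ 2.
Proof.
have H : 2 * (\sum_i a i) ^+ 2 <= 2 * (#|I|%:R * \sum_i a i ^+ 2).
  have -> : 2 * (#|I|%:R * \sum_i a i ^+ 2) =
     \sum_i \sum_j (a i ^+ 2 + a j ^+ 2).
    rewrite [RHS](eq_bigr (fun i => a i ^+ 2 *+ #|I| + \sum_j a j ^+ 2)); last first.
      by move=> i _; rewrite big_split /= sumr_const.
    rewrite big_split /= sumr_const.
    rewrite !mulr_natl mulr2n sumrMnl; congr (_ + _); apply: f_equal; exact: eq_card.
  rewrite expr2 mulr_suml mulr_sumr; apply: ler_sum => i _.
  rewrite !mulr_sumr; apply: ler_sum => j _.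
  exact: amgm2.
by rewrite ler_pM2l in H.
Qed.

Lemma term_le_sum (J : finType) (F : J -> R) (k : J) :
  (forall j, 0 <= F j) -> F k <= \sum_j F j.
Proof.
move=> h; rewrite (bigD1 k) //= lerDl sumr_ge0 // => j _; exact: h.
Qed.

Lemma quad_bound (I J : finType) (z : J -> R) (W : I -> J -> R) :
  \sum_i (\sum_k z k * W i k) ^+ 2 <=
  (#|J|%:R * \sum_i \sum_k W i k ^+ 2) * \sum_k z k ^+ 2.
Proof.
rewrite -mulrA mulr_suml mulr_sumr; apply: ler_sum => i _.
apply: (le_trans (sqr_sum_le _ (fun k => z k * W i k))).
rewrite ler_wpM2l // mulr_sumr; apply: ler_sum => k _.
rewrite exprMn mulrC ler_wpM2r ?sqr_ge0 //.
by apply: (term_le_sum _ (fun k => W i k ^+ 2)) => j; apply: sqr_ge0.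
Qed.

Lemma sum_delta (I : finType) (j : I) (F : I -> R) :
  \sum_i (i == j)%:R * F i = F j.
Proof.
rewrite (bigD1 j) //= big1 ?eqxx ?mul1r ?addr0 // => i /negbTE ->; by rewrite mul0r.
Qed.

Lemma ipE n (x y : 'rV[R]_n) : ip x y = \sum_l x 0 l * y 0 l.
Proof. by rewrite /ip !mxE; apply: eq_bigr => l _; rewrite mxE. Qed.

Lemma ipC n (x y : 'rV[R]_n) : ip x y = ip y x.
Proof. by rewrite !ipE; apply: eq_bigr => l _; rewrite mulrC. Qed.

Lemma ip_delta n (x : 'rV[R]_n) b : ip x (delta_mx 0 b) = x 0 b.
Proof.
rewrite ipE (bigD1 b) //= big1 ?addr0; first by rewrite mxE !eqxx mulr1.
by move=> l /negbTE hl; rewrite mxE hl andbF mulr0.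
Qed.

Lemma span_full m n (V E : 'M[R]_(m, n)) :
  row_free V -> (V <= E)%MS -> (E <= V)%MS.
Proof.
move=> fV sVE; have [_ <-] := mxrank_leqif_sup sVE.
rewrite eqn_leq mxrankS //= (eqP fV); exact: rank_leq_row.
Qed.

Definition Ej n (j : nat) : 'M[R]_(n - j, n) :=
  \matrix_(k, l) ((l : nat) == j + k)%N%:R.

Lemma sub_Ej n (j : 'I_n) (x : 'rV[R]_n) :
  (forall l : 'I_n, (l < j)%N -> x 0 l = 0) -> (x <= Ej n j)%MS.
Proof.
move=> hx; apply/submxP.
exists (\row_(k < n - j) x 0 (insubd j (j + k)%N)); apply/rowP => l; rewrite !mxE.
have [jl|lj] := leqP j l.
  have hk : (l - j < n - j)%N by rewrite ltn_sub2r // (leq_ltn_trans jl).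
  rewrite (bigD1 (Ordinal hk)) //= big1 ?addr0.
    rewrite !mxE /= (subnKC jl) eqxx mulr1; congr (x 0 _); apply/eqP; rewrite -val_eqE val_insubd ltn_ord //.

  move=> k hk'; rewrite !mxE; case: eqP => [e|]; last by rewrite mulr0.
  by exfalso; move/eqP: hk'; apply; apply: val_inj => /=; rewrite e addKn.
rewrite big1 ?hx // => k _; rewrite !mxE; case: eqP => [e|]; last by rewrite mulr0.
by move: lj; rewrite e ltnNge leq_addr.
Qed.

Section Main.
Variable n : nat.
Variable v : forall j : 'I_n, 'I_(n - j) -> 'rV[R]_n.
Hypothesis hind : forall j : 'I_n, lin_indep (v j).
Hypothesis hzero : forall (j : 'I_n) (i : 'I_(n - j)) (k : 'I_n), (k < j)%N -> v j i 0 k = 0.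
Hypothesis hnz : forall (j : 'I_n) (i : 'I_(n - j)), v j i 0 j != 0.

Definition Vm (j : 'I_n) : 'M[R]_(n - j, n) := \matrix_i v j i.

Lemma Vm_free j : row_free (Vm j).
Proof.
apply: inj_row_free => c; rewrite mulmx_sum_row => h.
apply/rowP => i; rewrite mxE.
apply: (hind j (fun i => c 0 i)); apply: (etrans _ h); apply: eq_bigr => k _.
by rewrite rowK.
Qed.

Lemma Ej_sub_Vm (j : 'I_n) : (Ej n j <= Vm j)%MS.
Proof.
apply: span_full; first exact: Vm_free.
apply/row_subP => i; rewrite rowK; apply: sub_Ej => l hl; exact: hzero.
Qed.

Lemma orth_zero (j : 'I_n) (u : 'rV[R]_n) :
  (forall l : 'I_n, (l < j)%N -> u 0 l = 0) ->
  (forall i, ip (v j i) u = 0) -> u = 0.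
Proof.
move=> hu hi.
have /submxP [c hc] : (u <= Vm j)%MS.
  apply: submx_trans (Ej_sub_Vm j); exact: sub_Ej.
have h0 : Vm j *m u^T = 0.
  apply/matrixP => i k; rewrite (ord1 k) [RHS]mxE -(hi i) /ip !mxE.
  by apply: eq_bigr => l _; rewrite !mxE.
have huu : ip u u = 0.
  by rewrite /ip {1}hc -mulmxA h0 mulmx0 mxE.
rewrite ipE in huu.
apply/rowP => l; rewrite mxE.
have := @psumr_eq0P R _ xpredT (fun l => u 0 l * u 0 l) _ huu l isT.
move=> h; apply/eqP; rewrite -sqrf_eq0 expr2 h // => i _. by rewrite -expr2 sqr_ge0.
Qed.

End Main.

Lemma qform_split n (T : 'M[R]_n) (j : 'I_n) (x : 'rV[R]_n) :
  (forall a b, T a b = T b a) ->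
  (forall a b : 'I_n, (j < a)%N -> (j < b)%N -> T a b = 0) ->
  (forall l : 'I_n, (l < j)%N -> x 0 l = 0) ->
  ip (x *m T) x = x 0 j * ip x
    (\row_l (if (j <= l)%N then 2 * T j l - (l == j)%:R * T j j else 0)).
Proof.
move=> hsym hT hx.
set S := \sum_l x 0 l * T j l.
have -> : ip x (\row_l (if (j <= l)%N then 2 * T j l - (l == j)%:R * T j j else 0))
   = 2 * S - x 0 j * T j j.
  rewrite ipE.
  rewrite (eq_bigr (fun l => 2 * (x 0 l * T j l) - (l == j)%:R * (x 0 l * T j j))).
    by rewrite sumrB -mulr_sumr sum_delta.
  move=> l _; rewrite mxE; case: leqP => hl; first by ring.
  rewrite hx // (_ : (l == j) = false); first by ring.
  by apply/negbTE; rewrite neq_ltn hl.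
have pt : forall a b : 'I_n, x 0 a * T a b * x 0 b =
    (a == j)%:R * (x 0 a * T a b * x 0 b) + (b == j)%:R * (x 0 a * T a b * x 0 b)
    - (b == j)%:R * ((a == j)%:R * (x 0 a * T a b * x 0 b)).
  move=> a b; case: (eqVneq a j) => [->|naj]; first by rewrite (_ : true%:R = 1 :> R) //; ring.
  case: (eqVneq b j) => [->|nbj]; first by rewrite (_ : true%:R = 1 :> R) //; ring.
  have -> : x 0 a * T a b * x 0 b = 0; last by ring.
  case: (ltngtP a j) => [aj|ja|e]; first by rewrite hx // !mul0r.
    case: (ltngtP b j) => [bj|jb|e]; first by rewrite (hx b) // mulr0.
      by rewrite hT // mulr0 mul0r.
    by move/eqP: nbj; case; apply: val_inj.
  by move/eqP: naj; case; apply: val_inj.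
rewrite ipE.
rewrite (eq_bigr (fun b => \sum_a x 0 a * T a b * x 0 b)); last first.
  by move=> b _; rewrite mxE mulr_suml.
rewrite (eq_bigr (fun b => \sum_a ((a == j)%:R * (x 0 a * T a b * x 0 b) + (b == j)%:R * (x 0 a * T a b * x 0 b)
    - (b == j)%:R * ((a == j)%:R * (x 0 a * T a b * x 0 b))))); last first.
  by move=> b _; apply: eq_bigr => a _; apply: pt.
rewrite (eq_bigr (fun b => x 0 j * T j b * x 0 b + (b == j)%:R * (\sum_a x 0 a * T a b * x 0 b)
    - (b == j)%:R * (x 0 j * T j b * x 0 b))); last first.
  by move=> b _; rewrite sumrB big_split /= sum_delta -!mulr_sumr sum_delta.
rewrite sumrB big_split /= !sum_delta.
rewrite (eq_bigr (fun b => x 0 j * (x 0 b * T j b))); last by move=> b _; ring.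
rewrite (eq_bigr (fun a => x 0 j * (x 0 a * T j a)) (P := xpredT) (F1 := fun a => x 0 a * T a j * x 0 j)); last first.
  by move=> a _; rewrite hsym; ring.
rewrite -!mulr_sumr -/S; ring.
Qed.

Lemma sym_of n (T : 'M[R]_n) : self_adjoint T -> forall a b, T a b = T b a.
Proof.
move=> hT a b; have := hT (delta_mx 0 a) (delta_mx 0 b).
rewrite -!rowE ip_delta [ip (delta_mx 0 a) _]ipC ip_delta !mxE; done.
Qed.

Lemma inj_part n (v : forall j : 'I_n, 'I_(n - j) -> 'rV[R]_n)
  (hind : forall j : 'I_n, lin_indep (v j))
  (hzero : forall (j : 'I_n) (i : 'I_(n - j)) (k : 'I_n), (k < j)%N -> v j i 0 k = 0)
  (hnz : forall (j : 'I_n) (i : 'I_(n - j)), v j i 0 j != 0) :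
  injective_family (fun p : {j : 'I_n & 'I_(n - j)} => v (tag p) (tagged p)).
Proof.
move=> T hT hq; have hsym := sym_of _ _ hT.
have claim : forall d (a b : 'I_n), (n - d <= a)%N -> (n - d <= b)%N -> T a b = 0.
  elim=> [|d IH] a b ha hb.
    by move: ha; rewrite subn0 leqNgt ltn_ord.
  have [dn|nd] := ltnP d n; last by apply: IH; lia.
  have hjn : (n - d.+1 < n)%N by lia.
  pose j : 'I_n := Ordinal hjn.
  have hrow : forall l : 'I_n, (j <= l)%N -> T j l = 0.
    move=> l jl.
    set u := \row_(l < n) (if (j <= l)%N then 2 * T j l - (l == j)%:R * T j j else 0).
    have u0 : u = 0.
      apply: (orth_zero _ _ hind hzero j).
        by move=> l' hl'; rewrite mxE leqNgt hl'.
      move=> i; have := hq (existT _ j i); rewrite /=.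
      rewrite (qform_split _ _ _ _ hsym _ (hzero j i)); last first.
        move=> a' b' ha2 hb2; apply: IH; rewrite /= in ha2 hb2; lia.
      by move/eqP; rewrite mulf_eq0 (negbTE (hnz j i)) /= => /eqP.
    have := congr1 (fun w : 'rV[R]_n => w 0 l) u0; rewrite !mxE jl.
    case: (eqVneq l j) => [->|nlj].
      rewrite (_ : true%:R = 1 :> R) // mul1r => h.
      by rewrite -[RHS]h; ring.
    rewrite (_ : false%:R = 0 :> R) // mul0r subr0 => /eqP; rewrite mulf_eq0 pnatr_eq0 /= => /eqP //.
  have hj : forall c : 'I_n, (n - d.+1 <= c)%N -> (c < n - d)%N -> c = j.
    by move=> c h1 h2; apply: val_inj => /=; lia.
  case: (leqP (n - d) a) => ha'; case: (leqP (n - d) b) => hb'.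
  - exact: IH.
  - by rewrite (hj b) // hsym; apply: hrow => /=; lia.
  - by rewrite (hj a) //; apply: hrow => /=; lia.
  - by rewrite (hj a) //; apply: hrow => /=; lia.
apply/matrixP => a b; rewrite mxE; apply: (claim n); by rewrite subnn.
Qed.

Lemma ip_ge0 n (y : 'rV[R]_n) : 0 <= ip y y.
Proof. rewrite ipE sumr_ge0 // => l _; rewrite -expr2 sqr_ge0 //. Qed.

Lemma frame_part n (v : forall j : 'I_n, 'I_(n - j) -> 'rV[R]_n)
  (hind : forall j : 'I_n, lin_indep (v j))
  (hzero : forall (j : 'I_n) (i : 'I_(n - j)) (k : 'I_n), (k < j)%N -> v j i 0 k = 0) :
  is_frame (fun p : {j : 'I_n & 'I_(n - j)} => v (tag p) (tagged p)).
Proof.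
set x := fun p : {j : 'I_n & 'I_(n - j)} => v (tag p) (tagged p).
set S := fun y : 'rV[R]_n => \sum_p (ip y (x p)) ^+ 2.
have S0 : forall y, 0 <= S y by move=> y; apply: sumr_ge0 => p _; apply: sqr_ge0.
set D := #|'I_n|%:R * \sum_p \sum_l (x p 0 l) ^+ 2.
have D0 : 0 <= D by apply: mulr_ge0 => //; apply: sumr_ge0 => p _; apply: sumr_ge0 => l _; apply: sqr_ge0.
have up : forall y, S y <= D * ip y y.
  move=> y; rewrite /S /D.
  have -> : ip y y = \sum_l y 0 l ^+ 2 by rewrite ipE; apply: eq_bigr => l _; rewrite expr2.
  rewrite (eq_bigr (fun p => (\sum_l y 0 l * x p 0 l) ^+ 2)); last by move=> p _; rewrite ipE.
  exact: quad_bound.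
have [C [C0 low]] : exists C, 0 <= C /\ forall y, ip y y <= C * S y.
  have [n0|npos] := posnP n.
    exists 0; split => // y; rewrite mul0r ipE big1 // => l.
    by have := ltn_ord l; rewrite {2}n0.
  pose j0 : 'I_n := Ordinal npos.
  have : (1%:M <= Vm _ v j0)%MS.
    apply: submx_trans (Ej_sub_Vm _ _ hind hzero j0).
    apply/row_subP => l; apply: sub_Ej => m; by rewrite /= ltn0.
  case/submxP => X hX.
  exists (#|'I_(n - j0)|%:R * \sum_l \sum_k X l k ^+ 2); split.
    by apply: mulr_ge0 => //; apply: sumr_ge0 => l _; apply: sumr_ge0 => k _; apply: sqr_ge0.
  move=> y.
  have ey : forall l, y 0 l = \sum_k ip y (v j0 k) * X l k.
    move=> l.
    have -> : y 0 l = \sum_m y 0 m * (X *m Vm _ v j0) l m.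
      rewrite -hX (eq_bigr (fun m => (m == l)%:R * y 0 m)) ?sum_delta //.
      by move=> m _; rewrite !mxE eq_sym mulrC.
    rewrite (eq_bigr (fun k => \sum_m y 0 m * v j0 k 0 m * X l k)); last first.
      by move=> k _; rewrite ipE mulr_suml.
    rewrite exchange_big /=; apply: eq_bigr => m _.
    rewrite !mxE mulr_sumr; apply: eq_bigr => k _; rewrite !mxE; ring.
  have -> : ip y y = \sum_l (\sum_k ip y (v j0 k) * X l k) ^+ 2.
    by rewrite ipE; apply: eq_bigr => l _; rewrite -ey expr2.
  apply: (le_trans (quad_bound _ _ (fun k => ip y (v j0 k)) X)).
  rewrite ler_wpM2l //.
    by apply: mulr_ge0 => //; apply: sumr_ge0 => l _; apply: sumr_ge0 => k _; apply: sqr_ge0.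
  rewrite /S -(@sig_big_dep _ _ _ 'I_n (fun j => 'I_(n - j)) xpredT (fun _ => xpredT)
                 (fun j k => ip y (v j k) ^+ 2)) /=.
  exact: (term_le_sum _ (fun j : 'I_n => \sum_(k < n - j) ip y (v j k) ^+ 2) j0 (fun j => sumr_ge0 _ (fun k _ => sqr_ge0 _))).
exists (C + 1)^-1, (D + (C + 1)^-1).
have hC : 0 < C + 1 by apply: ltr_pwDr.
split; first by rewrite invr_gt0.
split; first by rewrite lerDr.
move=> y; split.
  rewrite ler_pdivrMl //; apply: (le_trans (low y)).
  by rewrite ler_wpM2r // lerDl.
apply: (le_trans (up y)); rewrite ler_wpM2r ?ip_ge0 // lerDl invr_ge0 ltW //.
Qed.
End H.

(* indices are 0-based: block j : 'I_n consists of n - j vectors v j i,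
   whose coordinates 0..j-1 vanish and whose coordinate j is nonzero. *)
Theorem mainTheorem4 (R : realType) (n : nat)
  (v : forall j : 'I_n, 'I_(n - j) -> 'rV[R]_n)
  (hind : forall j : 'I_n, lin_indep (v j))
  (hzero : forall (j : 'I_n) (i : 'I_(n - j)) (k : 'I_n), (k < j)%N -> v j i 0 k = 0)
  (hnz : forall (j : 'I_n) (i : 'I_(n - j)), v j i 0 j != 0) :
  is_frame (fun p : {j : 'I_n & 'I_(n - j)} => v (tag p) (tagged p)) /\
  injective_family (fun p : {j : 'I_n & 'I_(n - j)} => v (tag p) (tagged p)).
Proof.
split; first exact: frame_part hind hzero.
exact: inj_part hind hzero hnz.
Qed.
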